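(* Let $n\ge 2$. Among all pairs $T_1,T_2$ of rooted trees on leaf set $[n]$, the pairs for which the cone $K_{T_1}+K_{T_2}$ has maximal dimension are exactly those for which $T_1$ and $T_2$ are both binary and have no nontrivial common clade, i.e. $\mathrm{clade}(T_1)\cap\mathrm{clade}(T_2)=\{[n]\}$.
   Context: A rooted tree on leaf set $[n]$ has leaves labeled bijectively by $[n]$ and internal vertices each with at least two children; it is binary if every internal vertex has exactly two children. A clade of $T$ is the set of leaves below an internal vertex; $\mathrm{clade}(T)$ is the set of clades, and $[n]$ is the trivial clade. An ultrametric is $\delta\in\mathbb{R}^{\binom{[n]}{2}}$ with $\delta_{uv}\le\max\{\delta_{uw},\delta_{vw}\}$ for all distinct $u,v,w$. $K_T$ is the set of $\delta$ such that there are real weights on the internal vertices of $T$, weakly increasing along every path toward the root, with $\delta_{uv}$ equal to the weight of the most recent common ancestor of $u$ and $v$; $K_{T_1}+K_{T_2}$ is the Minkowski sum. *)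

(* Defs.v *)
From HB Require Import structures.
From mathcomp Require Import all_boot all_order all_algebra.
From mathcomp Require Import boolp reals.
Set Implicit Arguments. Unset Strict Implicit. Unset Printing Implicit Defensive.
Import Order.TTheory GRing.Theory Num.Theory.
Local Open Scope ring_scope.

(* A rooted tree on leaf set [n] = 'I_n is encoded by its set of clades
   (leaf sets below internal vertices).  Vertices of the tree correspond to
   clades (internal vertices) and singletons (leaves). *)
Definition nodes (n : nat) (H : {set {set 'I_n}}) : {set {set 'I_n}} :=
  H :|: [set [set x] | x : 'I_n].

Definition children (n : nat) (H : {set {set 'I_n}}) (C : {set 'I_n})
  : {set {set 'I_n}} :=
  [set D in nodes H | (D \proper C) &&
     [forall E in nodes H, ~~ ((D \proper E) && (E \proper C))]].

Definition is_tree (n : nat) (H : {set {set 'I_n}}) : bool :=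
  [&& [set: 'I_n] \in H,
      [forall C in H, 2 <= #|C|]%N,
      [forall C in H, forall D in H,
          [|| C \subset D, D \subset C | [disjoint C & D]]] &
      [forall C in H, 2 <= #|children H C|]%N].

Definition binary (n : nat) (H : {set {set 'I_n}}) : bool :=
  [forall C in H, #|children H C| == 2]%N.

(* index set of binom(n,2): unordered pairs {u,v}, represented with u < v *)
Definition upair (n : nat) := {p : 'I_n * 'I_n | (p.1 < p.2)%N}.

Definition amb (R : realType) (n : nat) := 'rV[R]_#|{: upair n}|.

Definition dcoord (R : realType) (n : nat) (d : amb R n) (p : upair n) : R :=
  d ord0 (enum_rank p).

Definition lca (n : nat) (H : {set {set 'I_n}}) (u v : 'I_n) (C : {set 'I_n})
  : bool :=
  [&& C \in H, u \in C, v \in C &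
      [forall D in H, ((u \in D) && (v \in D)) ==> (C \subset D)]].

Arguments dcoord {R n}.
Definition K (R : realType) (n : nat) (H : {set {set 'I_n}}) (d : amb R n)
  : Prop :=
  exists w : {set 'I_n} -> R,
    (forall C D, C \in H -> D \in H -> C \proper D -> w C <= w D) /\
    (forall (p : upair n) C, lca H (val p).1 (val p).2 C -> dcoord d p = w C).

Definition msum (V : zmodType) (A B : V -> Prop) : V -> Prop :=
  fun x => exists a b, [/\ A a, B b & x = a + b].

(* dimension of (the linear span of) a set S in R^N: the maximal size of a
   linearly independent family of elements of S (at most N) *)
Definition setdim (R : realType) (N : nat) (S : 'rV[R]_N -> Prop) : nat :=
  (\max_(k < N.+1 | `[< exists s : seq 'rV[R]_N,
        [/\ size s = val k, forall x, x \in s -> S x & free s] >]) val k)%N.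
Arguments K R {n} H d.
Arguments setdim {R N} S.

(* Main.v *)
Require Import Defs.
From HB Require Import structures.
From mathcomp Require Import all_boot all_order all_algebra.
From mathcomp Require Import boolp reals.
From mathcomp Require Import zify ring lra.
Set Implicit Arguments. Unset Strict Implicit. Unset Printing Implicit Defensive.
Import Order.TTheory GRing.Theory Num.Theory.
Local Open Scope ring_scope.
Section Trees.
Local Open Scope nat_scope.
Variable n : nat.
Implicit Types H : {set {set 'I_n}}.

Lemma tree_root H : is_tree H -> [set: 'I_n] \in H.
Proof. by case/and4P. Qed.

Lemma tree_card H (C : {set 'I_n}) : is_tree H -> C \in H -> 2 <= #|C|.
Proof. by case/and4P=> _ /forall_inP h _ _ /h. Qed.

Lemma tree_lam H (C D : {set 'I_n}) : is_tree H -> C \in H -> D \in H ->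
  [|| C \subset D, D \subset C | [disjoint C & D]].
Proof. by case/and4P=> _ _ /forall_inP h _ /h /forall_inP h2 /h2. Qed.

Lemma tree_ch H (C : {set 'I_n}) : is_tree H -> C \in H -> 2 <= #|children H C|.
Proof. by case/and4P=> _ _ _ /forall_inP h /h. Qed.

Lemma in_nodes H (D : {set 'I_n}) : (D \in nodes H) = (D \in H) || (D \in [set [set x] | x : 'I_n]).
Proof. by rewrite /nodes inE. Qed.

Lemma nodes_ne H (D : {set 'I_n}) : is_tree H -> D \in nodes H -> exists x, x \in D.
Proof.
move=> tH; rewrite in_nodes => /orP[DH|/imsetP[x _ ->]]; last by exists x; rewrite set11.
by apply/card_gt0P; have := tree_card tH DH; case: #|D| => [|[]].
Qed.

Lemma nodes_lam H (A B : {set 'I_n}) x : is_tree H -> A \in nodes H -> B \in nodes H ->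
  x \in A -> x \in B -> (A \subset B) || (B \subset A).
Proof.
move=> tH; rewrite !in_nodes => /orP[AH|/imsetP[y _ ->]]; last first.
  by move=> _ /set1P -> xB; rewrite sub1set xB.
move=> /orP[BH|/imsetP[y _ ->]]; last first.
  by move=> xA /set1P <-; rewrite sub1set xA orbT.
move=> xA xB; case/or3P: (tree_lam tH AH BH) => [->|->|d] //; first by rewrite orbT.
by rewrite (disjointFr d xA) in xB.
Qed.

Lemma children_sub H (C D : {set 'I_n}) : D \in children H C -> (D \in nodes H) && (D \proper C).
Proof. by rewrite inE => /andP[-> /andP[-> _]]. Qed.

Lemma child_exists H (C Y : {set 'I_n}) : Y \in nodes H -> Y \proper C ->
  exists2 D, D \in children H C & Y \subset D.
Proof.
move=> YN YC.
pose Q := [set D in nodes H | (Y \subset D) && (D \proper C)].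
have YQ : Y \in Q by rewrite inE YN subxx YC.
case: (@arg_maxnP _ Y (mem Q) (fun D => #|D|) YQ) => D DQ Dmax.
move: DQ; rewrite /= inE => /and3P[DN YD DC].
exists D => //; rewrite inE DN DC /=; apply/forall_inP => E EN.
apply/negP => /andP[DE EC].
have EQ : E \in Q by rewrite inE EN EC (subset_trans YD (proper_sub DE)).
by have := Dmax E EQ; rewrite /= leqNgt (proper_card DE).
Qed.

Lemma child_uniq H (C D1 D2 : {set 'I_n}) x : is_tree H -> D1 \in children H C ->
  D2 \in children H C -> x \in D1 -> x \in D2 -> D1 = D2.
Proof.
move=> tH h1 h2 x1 x2.
have /andP[N1 P1] := children_sub h1; have /andP[N2 P2] := children_sub h2.
move: h1 h2; rewrite !inE => /and3P[_ _ /forall_inP F1] /and3P[_ _ /forall_inP F2].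
apply/eqP; case: (eqVneq D1 D2) => // ne.
case/orP: (nodes_lam tH N1 N2 x1 x2) => sub.
  have := F1 D2 N2; rewrite P2 andbT properEneq ne sub.
  by [].
have := F2 D1 N1; rewrite P1 andbT properEneq eq_sym ne sub.
by [].
Qed.

Definition samech H (C : {set 'I_n}) (u v : 'I_n) :=
  [exists D in children H C, (u \in D) && (v \in D)].

Lemma samech_refl H (C : {set 'I_n}) u : is_tree H -> C \in H -> u \in C -> samech H C u u.
Proof.
move=> tH CH uC.
have uN : [set u] \in nodes H by rewrite in_nodes; apply/orP; right; apply/imsetP; exists u.
have uP : [set u] \proper C by rewrite properEcard sub1set uC cards1 (tree_card tH CH).
case: (child_exists uN uP) => D DC uD.
by apply/exists_inP; exists D => //; rewrite -sub1set uD.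
Qed.

Lemma samech_sym H (C : {set 'I_n}) u v : samech H C u v = samech H C v u.
Proof.
by apply/exists_inP/exists_inP => -[D DC /andP[a b]]; exists D => //; rewrite a b.
Qed.

Lemma samech_trans H (C : {set 'I_n}) u v w : is_tree H ->
  samech H C u v -> samech H C u w -> samech H C v w.
Proof.
move=> tH /exists_inP[D1 h1 /andP[u1 v1]] /exists_inP[D2 h2 /andP[u2 w2]].
have e := child_uniq tH h1 h2 u1 u2; subst D2.
by apply/exists_inP; exists D1 => //; rewrite v1 w2.
Qed.

Lemma mincl_ex H (X : {set 'I_n}) : is_tree H -> exists D, [/\ D \in H, X \subset D &
  forall E, E \in H -> X \subset E -> #|D| <= #|E|].
Proof.
move=> tH.
pose Q := [set E in H | X \subset E].
have TQ : [set: 'I_n] \in Q by rewrite inE tree_root // subsetT.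
case: (@arg_minnP _ _ (mem Q) (fun D => #|D|) TQ) => D DQ Dmin.
move: DQ; rewrite /= inE => /andP[DH XD]; exists D; split => // E EH XE.
by apply: Dmin; rewrite /= inE EH XE.
Qed.

Lemma spread H (X D : {set 'I_n}) u : is_tree H -> 2 <= #|X| -> D \in H -> X \subset D ->
  (forall E, E \in H -> X \subset E -> #|D| <= #|E|) -> u \in X ->
  exists2 v, v \in X & ~~ samech H D u v.
Proof.
move=> tH X2 DH XD Dmin uX.
case: (boolP [forall v in X, samech H D u v]); last first.
  by rewrite negb_forall_in => /exists_inP[v vX nv]; exists v.
move/forall_inP => all.
have /exists_inP[Du hDu /andP[uDu _]] := all u uX.
have XDu : X \subset Du.
  apply/subsetP => v vX; have /exists_inP[D' h' /andP[uD' vD']] := all v vX.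
  by rewrite -(child_uniq tH h' hDu uD' uDu).
have /andP[DuN DuP] := children_sub hDu.
have DuH : Du \in H.
  move: DuN; rewrite in_nodes => /orP[//|/imsetP[y _ Dy]].
  by move: (subset_leq_card XDu); rewrite Dy cards1 => h; have := leq_trans X2 h.
by have := Dmin Du DuH XDu; rewrite leqNgt (proper_card DuP).
Qed.

Lemma close H (X D : {set 'I_n}) u v Y : is_tree H -> D \in H -> X \subset D ->
  (forall E, E \in H -> X \subset E -> #|D| <= #|E|) ->
  u \in X -> v \in X -> ~~ samech H D u v ->
  Y \in H -> u \in Y -> v \in Y -> Y = X \/ #|X| < #|Y|.
Proof.
move=> tH DH XD Dmin uX vX ns YH uY vY.
have uD : u \in D by apply: (subsetP XD).
have DY : D \subset Y.
  have YN : Y \in nodes H by rewrite in_nodes YH.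
  have DN : D \in nodes H by rewrite in_nodes DH.
  case/orP: (nodes_lam tH YN DN uY uD) => // YD.
  case: (eqVneq Y D) => [->//|ne].
  have YP : Y \proper D by rewrite properEneq ne YD.
  have [C hC YC] := child_exists YN YP.
  by move: ns; rewrite /samech; case/exists_inP; exists C => //; rewrite (subsetP YC) // (subsetP YC).
have XY := subset_trans XD DY.
case: (eqVneq Y X) => [->|ne]; first by left.
by right; apply: proper_card; rewrite properEneq eq_sym ne XY.
Qed.

End Trees.
Section Trees2.
Local Open Scope nat_scope.
Variable n : nat.
Implicit Types H : {set {set 'I_n}}.

Lemma good_pair H1 H2 (X : {set 'I_n}) : is_tree H1 -> is_tree H2 -> X \in H1 ->
  exists u v, [/\ u \in X, v \in X, u != v &
    forall Y, Y \in H1 :|: H2 -> u \in Y -> v \in Y -> Y = X \/ #|X| < #|Y|].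
Proof.
move=> t1 t2 XH.
have X2 := tree_card t1 XH.
have [D1 [D1H XD1 m1]] := mincl_ex X t1.
have [D2 [D2H XD2 m2]] := mincl_ex X t2.
have [u0 u0X] : exists u, u \in X by apply/card_gt0P; case: #|X| X2 => [|[]].
suff [u [v [uX vX n1 n2]]] : exists u v, [/\ u \in X, v \in X,
    ~~ samech H1 D1 u v & ~~ samech H2 D2 u v].
  exists u, v; split => //.
    apply: contra n1 => /eqP <-; apply: samech_refl => //; exact: (subsetP XD1).
  move=> Y; rewrite inE => /orP[YH|YH] uY vY.
    exact: (close t1 D1H XD1 m1 uX vX n1 YH uY vY).
  exact: (close t2 D2H XD2 m2 uX vX n2 YH uY vY).
have [v vX nv] := spread t1 X2 D1H XD1 m1 u0X.
have [w wX nw] := spread t2 X2 D2H XD2 m2 u0X.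
case: (boolP (samech H2 D2 u0 v)) => s2; last by exists u0, v.
case: (boolP (samech H1 D1 u0 w)) => s1; last by exists u0, w.
exists v, w; split => //.
  apply: contra nv => h.
  have a : samech H1 D1 w u0 by rewrite samech_sym.
  have b : samech H1 D1 w v by rewrite samech_sym.
  exact: samech_trans t1 a b.
apply: contra nw => h.
have a : samech H2 D2 v u0 by rewrite samech_sym.
exact: samech_trans t2 a h.
Qed.

Lemma lca_ex H (u v : 'I_n) : is_tree H -> exists C, lca H u v C.
Proof.
move=> tH; have [C [CH sC mC]] := mincl_ex [set u; v] tH.
have uC : u \in C by apply: (subsetP sC); rewrite !inE eqxx.
have vC : v \in C by apply: (subsetP sC); rewrite !inE eqxx orbT.
exists C; rewrite /lca CH uC vC /=; apply/forall_inP => D DH; apply/implyP => /andP[uD vD].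
have CN : C \in nodes H by rewrite in_nodes CH.
have DN : D \in nodes H by rewrite in_nodes DH.
case/orP: (nodes_lam tH CN DN uC uD) => // DC.
have sD : [set u; v] \subset D by apply/subsetP => x; rewrite !inE => /orP[] /eqP ->.
have := mC D DH sD => le.
have /eqP -> // : D == C by rewrite eqEcard DC le.
Qed.

Lemma lca_uniq H (u v : 'I_n) C C' : lca H u v C -> lca H u v C' -> C = C'.
Proof.
case/and4P => CH uC vC /forall_inP h; case/and4P => C'H uC' vC' /forall_inP h'.
apply/eqP; rewrite eqEsubset.
by rewrite (implyP (h C' C'H)) ?uC' ?vC' // (implyP (h' C CH)) ?uC ?vC.
Qed.

End Trees2.
Section Count.
Local Open Scope nat_scope.
Variable n : nat.
Implicit Types H : {set {set 'I_n}}.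

Lemma parent_ex H (D : {set 'I_n}) : is_tree H -> D \in nodes H -> D != setT ->
  exists2 P, P \in H & D \in children H P.
Proof.
move=> tH DN DT.
pose Q := [set E in H | D \proper E].
have TQ : [set: 'I_n] \in Q by rewrite inE tree_root // properT.
case: (@arg_minnP _ _ (mem Q) (fun D => #|D|) TQ) => P PQ Pmin.
move: PQ; rewrite /= inE => /andP[PH DP]; exists P => //.
rewrite inE DN DP /=; apply/forall_inP => E EN; apply/negP => /andP[DE EP].
move: EN; rewrite in_nodes => /orP[EH|/imsetP[x _ Ex]].
  have EQ : E \in Q by rewrite inE EH DE.
  by have := Pmin E EQ; rewrite /= leqNgt (proper_card EP).
have [y yD] := nodes_ne tH DN.
have := proper_card DE; rewrite Ex cards1 ltnS leqn0 => /eqP/cards0_eq D0.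
by rewrite D0 inE in yD.
Qed.

Lemma parent_uniq H (D P P' : {set 'I_n}) : is_tree H -> P \in H -> P' \in H ->
  D \in children H P -> D \in children H P' -> P = P'.
Proof.
move=> tH PH P'H hP hP'.
have /andP[DN DP] := children_sub hP; have /andP[_ DP'] := children_sub hP'.
have [x xD] := nodes_ne tH DN.
have xP := subsetP (proper_sub DP) x xD; have xP' := subsetP (proper_sub DP') x xD.
have PN : P \in nodes H by rewrite in_nodes PH.
have P'N : P' \in nodes H by rewrite in_nodes P'H.
move: hP hP'; rewrite !inE => /and3P[_ _ /forall_inP F] /and3P[_ _ /forall_inP F'].
apply/eqP; case: (eqVneq P P') => // ne.
case/orP: (nodes_lam tH PN P'N xP xP') => sub.
  by have := F' P PN; rewrite DP properEneq ne sub.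
by have := F P' P'N; rewrite DP' properEneq eq_sym ne sub.
Qed.

Lemma sum_eq1 (T : finType) (A : {pred T}) a : a \in A -> \sum_(x in A) (x == a) = 1.
Proof.
move=> aA; rewrite (bigD1 a) //= eqxx big1 // => x /andP[_ /negbTE ->] //.
Qed.

Lemma parent_count H (D : {set 'I_n}) : is_tree H -> D \in nodes H ->
  \sum_(C in H) (D \in children H C) = (D != setT).
Proof.
move=> tH DN; case: (eqVneq D setT) => [->|DT] /=.
  apply: big1 => C _; case h: (_ \in children H C) => //.
  by move: h => /children_sub /andP[_]; rewrite properE subsetT /= andbF.
have [P PH hP] := parent_ex tH DN DT.
rewrite -(sum_eq1 PH); apply: eq_bigr => C CH.
case: (eqVneq C P) => [->|ne]; first by rewrite hP.
case hC: (D \in children H C) => //.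
by case/eqP: ne; apply: parent_uniq tH CH PH hC hP.
Qed.

Lemma nodes_card H : is_tree H -> #|nodes H| = #|H| + n.
Proof.
move=> tH; rewrite /nodes cardsU card_imset; last exact: set1_inj.
rewrite card_ord.
suff -> : H :&: [set [set x] | x : 'I_n] = set0 by rewrite cards0 subn0.
apply/setP => D; rewrite !inE; apply/negbTE/negP => /andP[DH /imsetP[x _ Dx]].
by have := tree_card tH DH; rewrite Dx cards1.
Qed.

Lemma tree_count H : is_tree H -> \sum_(C in H) #|children H C| = #|H| + n - 1.
Proof.
move=> tH.
have e : forall C, #|children H C| = \sum_(D in nodes H) (D \in children H C).
  move=> C; rewrite -sum1_card.
  rewrite [RHS](eq_bigr (fun D => if D \in children H C then 1 else 0)) /=; last by move=> D _; case: (_ \in _).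
  rewrite -big_mkcondr; apply: eq_bigl => D /=.
  by case h: (D \in children H C); rewrite ?andbF // andbT; have /andP[] := children_sub h.
under eq_bigr do rewrite e.
rewrite exchange_big /=.
rewrite (eq_bigr (fun D => (D != setT : nat))); last by move=> D DN; apply: parent_count.
have TN : [set: 'I_n] \in nodes H by rewrite in_nodes tree_root.
rewrite -(nodes_card tH) -sum1_card.
rewrite [in RHS](eq_bigr (fun D => (D == setT) + (D != setT))); last by move=> D _; case: eqP.
by rewrite big_split /= sum_eq1 // add1n subSS subn0.
Qed.

Lemma tree_le H : is_tree H -> #|H| <= n - 1.
Proof.
move=> tH; have := tree_count tH.
have : \sum_(C in H) 2 <= \sum_(C in H) #|children H C|.
  by apply: leq_sum => C CH; apply: tree_ch.
rewrite sum_nat_const => h1 h2; rewrite h2 in h1.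
have := tree_card tH (tree_root tH); rewrite cardsT card_ord => n2.
move: h1; lia.
Qed.

Lemma tree_binary H : is_tree H -> binary H = (#|H| == n - 1).
Proof.
move=> tH; have hc := tree_count tH.
have := tree_card tH (tree_root tH); rewrite cardsT card_ord => n2.
case: (boolP (binary H)) => b.
  move: b => /forall_inP b.
  rewrite (eq_bigr (fun _ => 2)) in hc; last by move=> C /b /eqP.
  by move: hc; rewrite sum_nat_const => h; apply/esym/eqP; lia.
move: b; rewrite /binary negb_forall_in => /exists_inP[C0 C0H nC0].
have : \sum_(C in H) (2 + (C == C0)) <= \sum_(C in H) #|children H C|.
  apply: leq_sum => C CH; case: (eqVneq C C0) => [->|_]; last by rewrite addn0 tree_ch.
  by have := tree_ch tH C0H; rewrite addn1 leq_eqVlt eq_sym (negbTE nC0).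
rewrite big_split /= sum_nat_const sum_eq1 // hc => h.
apply/esym/negbTE/eqP => e; rewrite e in h; clear -h n2; lia.
Qed.

End Count.
Section Lin.
Variable R : realType.
Variable n : nat.
Implicit Types H : {set {set 'I_n}}.

Definition pin (p : upair n) (X : {set 'I_n}) : bool :=
  ((val p).1 \in X) && ((val p).2 \in X).

Definition evec (X : {set 'I_n}) : amb R n := \row_j (pin (enum_val j) X)%:R.

Lemma evecE X p : dcoord (evec X) p = (pin p X)%:R.
Proof. by rewrite /dcoord /evec mxE enum_rankK. Qed.

Lemma dcoord_inj (d1 d2 : amb R n) : (forall p, dcoord d1 p = dcoord d2 p) -> d1 = d2.
Proof.
move=> h; apply/rowP => j; rewrite -[j]enum_valK; exact: h.
Qed.

Lemma dcoordD (a b : amb R n) p : dcoord (a + b) p = dcoord a p + dcoord b p.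
Proof. by rewrite /dcoord mxE. Qed.
Lemma dcoordN (a : amb R n) p : dcoord (- a) p = - dcoord a p.
Proof. by rewrite /dcoord mxE. Qed.
Lemma dcoordB (a b : amb R n) p : dcoord (a - b) p = dcoord a p - dcoord b p.
Proof. by rewrite dcoordD dcoordN. Qed.
Lemma dcoordZ c (a : amb R n) p : dcoord (c *: a) p = c * dcoord a p.
Proof. by rewrite /dcoord mxE. Qed.
Lemma dcoord_sum (I : finType) (P : pred I) (F : I -> amb R n) p :
  dcoord (\sum_(i | P i) F i) p = \sum_(i | P i) dcoord (F i) p.
Proof. by rewrite /dcoord summxE. Qed.

Lemma zero_K H : K R H 0.
Proof.
exists (fun _ => 0); split => // p C _; by rewrite /dcoord mxE.
Qed.

Lemma negevec_K H C : C \in H -> K R H (- evec C).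
Proof.
move=> CH; exists (fun E : {set 'I_n} => if E \subset C then -1 else (0 : R)); split.
  move=> E F _ _ EF; case: (boolP (F \subset C)) => FC.
    by rewrite (subset_trans (proper_sub EF) FC) lexx.
  by case: ifP => _; rewrite ?lexx ?lerN10.
move=> p E /and4P[EH uE vE /forall_inP h].
rewrite dcoordN evecE /pin; case: ifP => EC.
  by rewrite (subsetP EC _ uE) (subsetP EC _ vE).
have := implyP (h C CH); rewrite EC /=.
by case: ((val p).1 \in C); case: ((val p).2 \in C) => /= h2; rewrite ?oppr0 //; have := h2 isT.
Qed.

End Lin.
Section Span.
Variable R : realType.
Variable n : nat.
Implicit Types H : {set {set 'I_n}}.

Definition chi H (C : {set 'I_n}) : amb R n :=
  evec R C - \sum_(D in H | D \in children H C) evec R D.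

Lemma chiE H C L (p : upair n) : is_tree H -> C \in H -> lca H (val p).1 (val p).2 L ->
  dcoord (chi H C) p = (C == L)%:R.
Proof.
move=> tH CH hL; have /and4P[LH uL vL /forall_inP hmin] := hL.
rewrite /chi dcoordB evecE dcoord_sum; under eq_bigr do rewrite evecE.
have pL : pin p L by rewrite /pin uL vL.
case: (boolP (pin p C)) => pC; last first.
  rewrite big1 ?subr0; last first.
    move=> D /andP[_ /children_sub /andP[_ /proper_sub DC]].
    case pD: (pin p D) => //; case/negP: pC; move: pD; rewrite /pin => /andP[a b].
    by rewrite (subsetP DC _ a) (subsetP DC _ b).
  by case: (eqVneq C L) pC => [->|]; rewrite ?pL.
case: (eqVneq C L) => [eCL|ne].
  rewrite big1 ?subr0 //.
  move=> D /andP[DH /children_sub /andP[_ DC]].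
  case pD: (pin p D) => //; move: pD; rewrite /pin => /andP[a b].
  have := implyP (hmin D DH); rewrite a b => /(_ isT); rewrite -eCL => CD.
  by move: DC; rewrite properE CD andbF.
have LC : L \subset C by move: pC; rewrite /pin => /andP[a b]; have := implyP (hmin C CH); rewrite a b => /(_ isT).
have LP : L \proper C by rewrite properEneq eq_sym ne LC.
have LN : L \in nodes H by rewrite in_nodes LH.
have [D hD LD] := child_exists LN LP.
have DH : D \in H.
  have /andP[DN _] := children_sub hD.
  move: DN; rewrite in_nodes => /orP[//|/imsetP[x _ Dx]].
  by have := subset_leq_card LD; rewrite Dx cards1 => h; have := leq_trans (tree_card tH LH) h.
rewrite (bigD1 D) /=; last by rewrite DH hD.
have -> : pin p D by rewrite /pin (subsetP LD _ uL) (subsetP LD _ vL).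
rewrite big1 ?addr0 ?subrr //.
move=> D' /andP[/andP[D'H hD'] nD'].
case pD': (pin p D') => //; move: pD'; rewrite /pin => /andP[a _].
by case/eqP: nD'; apply: child_uniq tH hD' hD a (subsetP LD _ uL).
Qed.

Lemma K_span H d : is_tree H -> K R H d -> d \in <<image (@evec R n) H>>%VS.
Proof.
move=> tH [w [_ wl]].
have -> : d = \sum_(C in H) w C *: chi H C.
  apply: dcoord_inj => p; rewrite dcoord_sum.
  have [L hL] := lca_ex (val p).1 (val p).2 tH.
  have /and4P[LH _ _ _] := hL.
  rewrite (wl p L hL).
  rewrite (eq_bigr (fun C => w C * (C == L)%:R)); last first.
    by move=> C CH; rewrite dcoordZ (chiE tH CH hL).
  rewrite (bigD1 L) //= eqxx mulr1 big1 ?addr0 // => C /andP[_ /negbTE ->].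
  by rewrite mulr0.
apply: memv_suml => C CH; apply: memvZ; apply: memvB.
  by apply: memv_span; apply: image_f.
by apply: memv_suml => D /andP[DH _]; apply: memv_span; apply: image_f.
Qed.

End Span.
Section Indep.
Variable R : realType.
Variable n : nat.
Implicit Types H : {set {set 'I_n}}.

Lemma pair_of (u v : 'I_n) : u != v ->
  exists p : upair n, forall X, pin p X = (u \in X) && (v \in X).
Proof.
move=> ne; case: (ltngtP u v) => h.
- by exists (@exist _ (fun p : 'I_n * 'I_n => (p.1 < p.2)%N) (u, v) h).
- by exists (@exist _ (fun p : 'I_n * 'I_n => (p.1 < p.2)%N) (v, u) h) => X; rewrite /pin /= andbC.
- by case/eqP: ne; apply: val_inj.
Qed.

Lemma good_pair2 H1 H2 (X : {set 'I_n}) : is_tree H1 -> is_tree H2 -> X \in H1 :|: H2 ->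
  exists p : upair n, pin p X /\
    forall Y, Y \in H1 :|: H2 -> pin p Y -> Y = X \/ (#|X| < #|Y|)%N.
Proof.
move=> t1 t2; rewrite inE => /orP[XH|XH].
  have [u [v [uX vX ne h]]] := good_pair t1 t2 XH.
  have [p hp] := pair_of ne; exists p; rewrite hp uX vX; split => // Y YU.
  by rewrite hp => /andP[]; apply: h.
have [u [v [uX vX ne h]]] := good_pair t2 t1 XH.
have [p hp] := pair_of ne; exists p; rewrite hp uX vX; split => // Y YU.
by rewrite hp => /andP[]; apply: h; rewrite setUC.
Qed.

Lemma card_le (C : {set 'I_n}) : (#|C| <= n)%N.
Proof. by rewrite -[X in (_ <= X)%N](card_ord n) max_card. Qed.

Lemma evec_indep H1 H2 (c : {set 'I_n} -> R) : is_tree H1 -> is_tree H2 ->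
  \sum_(C in H1 :|: H2) c C *: evec R C = 0 -> forall C, C \in H1 :|: H2 -> c C = 0.
Proof.
move=> t1 t2 hs.
suff: forall k (C : {set 'I_n}), (n.+1 - #|C| <= k)%N -> C \in H1 :|: H2 -> c C = 0.
  by move=> h C; apply: (h n.+1); rewrite leq_subr.
elim=> [|k IH] C hk CU.
  by have := card_le C; move: hk; lia.
have [p [pC hp]] := good_pair2 t1 t2 CU.
have := congr1 (fun d => dcoord d p) hs; rewrite /= dcoord_sum.
rewrite (bigD1 C) //= dcoordZ evecE pC mulr1 big1 ?addr0; first by move=> ->; rewrite /dcoord mxE.
move=> Y /andP[YU nY]; rewrite dcoordZ evecE.
case pY: (pin p Y); last by rewrite mulr0.
case: (hp Y YU pY) => [eY|lt]; first by rewrite eY eqxx in nY.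
rewrite (IH Y) ?mul0r //.
by have := card_le Y; move: hk lt; lia.
Qed.

Lemma free_image (U : {set {set 'I_n}}) (f : {set 'I_n} -> amb R n) :
  (forall c, \sum_(C in U) c C *: f C = 0 -> forall C, C \in U -> c C = 0) ->
  free (image f U).
Proof.
move=> h.
have fT : free (image_tuple f (mem U)) -> free (image f U) by [].
apply: fT; apply/freeP => k hk i.
pose c C := \sum_(j < #|U| | enum_val j == C) k j.
have cE : forall j, c (enum_val j) = k j.
  move=> j; rewrite /c (eq_bigl (fun j' => j' == j)) ?big_pred1_eq // => j'.
  by apply/eqP/eqP => [/enum_val_inj|->].
have : \sum_(C in U) c C *: f C = 0.
  rewrite big_enum_val -[RHS]hk; apply: eq_bigr => j _.
  by rewrite cE /= (nth_image _ f).
move/h => /(_ (enum_val i) (enum_valP i)); by rewrite cE.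
Qed.

End Indep.
Section Dim.
Variable R : realType.

Lemma free_size_le N (s : seq 'rV[R]_N) : free s -> (size s <= N)%N.
Proof.
move=> /eqP <-; have := dimvS (subvf <<s>>%VS); rewrite dimvf.
by rewrite (@dim_matrix R 1 N) mul1r.
Qed.

Lemma setdim_ge N (S : 'rV[R]_N -> Prop) s :
  (forall x, x \in s -> S x) -> free s -> (size s <= setdim S)%N.
Proof.
move=> hS fs; have hs : (size s < N.+1)%N by rewrite ltnS free_size_le.
rewrite /setdim; apply: (leq_bigmax_cond (Ordinal hs) (F := fun k => val k)).
by apply/asboolP; exists s.
Qed.

Lemma setdim_le N (S : 'rV[R]_N -> Prop) m :
  (forall s, (forall x, x \in s -> S x) -> free s -> (size s <= m)%N) -> (setdim S <= m)%N.
Proof.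
move=> h; apply/bigmax_leqP => k /asboolP [s [hs hS fs]]; rewrite -hs; exact: h.
Qed.

Variable n : nat.

Theorem dim_msum (S1 S2 : {set {set 'I_n}}) : is_tree S1 -> is_tree S2 ->
  setdim (msum (K R S1) (K R S2)) = #|S1 :|: S2|.
Proof.
move=> t1 t2; apply/eqP; rewrite eqn_leq; apply/andP; split.
  apply: setdim_le => s hS fs.
  have sub : forall S : {set {set 'I_n}}, S \subset S1 :|: S2 ->
      {subset image (@evec R n) S <= image (@evec R n) (S1 :|: S2)}.
    move=> S sS y; case/fintype.imageP => C CS ->; apply: image_f; exact: (subsetP sS).
  have hsp : (<<s>> <= <<image (@evec R n) (S1 :|: S2)>>)%VS.
    apply/span_subvP => x xs; have [a [b [Ka Kb ->]]] := hS x xs.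
    apply: memvD.
      by apply: (subvP (sub_span (sub _ (subsetUl _ _)))); apply: K_span.
    by apply: (subvP (sub_span (sub _ (subsetUr _ _)))); apply: K_span.
  move/eqP: fs => <-; apply: leq_trans (dimvS hsp) _.
  by apply: leq_trans (dim_span _) _; rewrite size_image.
rewrite -(size_image (fun C => - @evec R n C)); apply: setdim_ge.
  move=> x /fintype.imageP[C CU ->]; move: CU; rewrite inE => /orP[CS|CS].
    by exists (- evec R C), 0; split; rewrite ?addr0 //; [apply: negevec_K | apply: zero_K].
  by exists 0, (- evec R C); split; rewrite ?add0r //; [apply: zero_K | apply: negevec_K].
apply: free_image => c hc C CU.
have : \sum_(C in S1 :|: S2) (- c C) *: evec R C = 0.
  by rewrite -[RHS]hc; apply: eq_bigr => D _; rewrite scaleNr scalerN.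
by move/(evec_indep t1 t2) => /(_ C CU) /eqP; rewrite oppr_eq0 => /eqP.
Qed.

End Dim.
Section Cat.
Local Open Scope nat_scope.
Variable n : nat.
Hypothesis n2 : 2 <= n.
Variable tau : 'I_n -> 'I_n.
Hypothesis tau_inj : injective tau.

Definition Lk (k : nat) : {set 'I_n} := tau @: [set i : 'I_n | i < k].
Definition cat : {set {set 'I_n}} := [set Lk (val k).+2 | k : 'I_n.-1].

Lemma card_lt k : k <= n -> #|[set i : 'I_n | i < k]| = k.
Proof.
move=> hk.
have -> : [set i : 'I_n | i < k] = [set widen_ord hk i | i : 'I_k].
  apply/setP => x; rewrite inE; apply/idP/imsetP => [xk|[i _ ->]]; last exact: ltn_ord i.
  by exists (Ordinal xk) => //; apply: val_inj.
by rewrite card_imset ?card_ord // => a b /(congr1 val) /= /val_inj.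
Qed.

Lemma card_Lk k : k <= n -> #|Lk k| = k.
Proof. by move=> hk; rewrite card_imset // card_lt. Qed.

Lemma mem_Lk x k : (tau x \in Lk k) = (x < k).
Proof. by rewrite mem_imset // inE. Qed.

Lemma Lk_sub j k : j <= k -> Lk j \subset Lk k.
Proof.
move=> jk; apply/subsetP => y /imsetP[x]; rewrite inE => xj ->.
by rewrite mem_Lk (leq_trans xj jk).
Qed.

Lemma in_cat E : E \in cat -> exists2 k, 2 <= k <= n & E = Lk k.
Proof.
case/imsetP => k _ ->; exists (val k).+2 => //.
by case: k => k hk /=; move: hk n2; lia.
Qed.

Lemma cat_in k : 2 <= k <= n -> Lk k \in cat.
Proof.
case/andP => k2 kn; have hk : k - 2 < n.-1 by move: k2 kn; lia.
by apply/imsetP; exists (Ordinal hk) => //=; congr Lk; move: k2; lia.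
Qed.

Lemma LkT : Lk n = setT.
Proof.
apply/eqP; rewrite eqEcard subsetT /= cardsT card_ord card_Lk //.
Qed.

Lemma cat_children k : 2 <= k <= n -> 2 <= #|children cat (Lk k)|.
Proof.
case/andP => k2 kn.
have hk1 : k.-1 < n by move: k2 kn; lia.
pose x := Ordinal hk1.
pose A := Lk k.-1; pose B := [set tau x].
have cA : #|A| = k.-1 by rewrite card_Lk //; move: kn; lia.
have cE : #|Lk k| = k by rewrite card_Lk.
have AB : A != B.
  apply/eqP => e; have : tau x \in A by rewrite e set11.
  by rewrite mem_Lk /= ltnn.
have AN : A \in nodes cat.
  rewrite in_nodes; case: (ltnP 2 k) => h.
    by rewrite cat_in //; move: h kn; lia.
  have : #|A| == 1 by rewrite cA; move: h k2; lia.
  by case/cards1P => y ->; apply/orP; right; apply/imsetP; exists y.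
have BN : B \in nodes cat by rewrite in_nodes; apply/orP; right; apply/imsetP; exists (tau x).
have AP : A \proper Lk k by rewrite properEcard Lk_sub ?leq_pred // cA cE; move: k2; lia.
have xE : tau x \in Lk k by rewrite mem_Lk /=; move: k2; lia.
have BP : B \proper Lk k by rewrite properEcard sub1set xE cards1 cE; move: k2; lia.
have Ach : A \in children cat (Lk k).
  rewrite inE AN AP /=; apply/forall_inP => F _; apply/negP => /andP[/proper_card h1 /proper_card h2].
  by move: h1 h2; rewrite cA cE; lia.
have Bch : B \in children cat (Lk k).
  rewrite inE BN BP /=; apply/forall_inP => F; rewrite in_nodes => /orP[/in_cat[j /andP[j2 jn] ->]|/imsetP[y _ ->]];
    apply/negP => /andP[h1 h2].
    have : tau x \in Lk j by rewrite (subsetP (proper_sub h1)) // set11.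
    rewrite mem_Lk /= => xj; have := proper_card h2; rewrite cE card_Lk //.
    by move: xj k2; lia.
  by have := proper_card h1; rewrite !cards1.
have : [set A; B] \subset children cat (Lk k).
  by apply/subsetP => F; rewrite in_set2 => /orP[] /eqP ->.
by move/subset_leq_card; rewrite cards2 AB.
Qed.

Lemma cat_tree : is_tree cat.
Proof.
apply/and4P; split.
- by rewrite -LkT cat_in // n2 leqnn.
- by apply/forall_inP => E /in_cat[k /andP[k2 kn] ->]; rewrite card_Lk.
- apply/forall_inP => E /in_cat[j /andP[j2 jn] ->]; apply/forall_inP => F /in_cat[k /andP[k2 kn] ->].
  by case: (leqP j k) => h; [rewrite (Lk_sub h) | rewrite (Lk_sub (ltnW h)) orbT].
- by apply/forall_inP => E /in_cat[k hk ->]; apply: cat_children.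
Qed.

Lemma card_cat : #|cat| = n - 1.
Proof.
rewrite card_imset ?card_ord; first by case: n n2 => // m _; rewrite subn1.
move=> a b e; apply: val_inj.
have ha : (val a).+2 <= n by case: a {e} => a ha /=; move: ha n2; lia.
have hb : (val b).+2 <= n by case: b {e ha} => b hb /=; move: hb n2; lia.
have := congr1 (fun E : {set 'I_n} => #|E|) e; rewrite /= !card_Lk //; by case.
Qed.

End Cat.

Lemma cat_inter n (n2 : (2 <= n)%N) :
  cat id :&: cat (@rev_ord n) = [set [set: 'I_n]].
Proof.
have n0 : (0 < n)%N by apply: leq_trans n2.
apply/setP => E; rewrite !inE; apply/andP/eqP => [[h1 h2]|->].
  have [j /andP[j2 jn] e1] := in_cat n2 h1.
  have [k /andP[k2 kn] e2] := in_cat n2 h2.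
  have : Ordinal n0 \in E.
    rewrite e1 -[Ordinal n0]/(id (Ordinal n0)) mem_Lk //= ; lia.
  rewrite e2 -[Ordinal n0]rev_ordK mem_Lk /=; last exact: rev_ord_inj.
  move=> h; rewrite -(LkT (@rev_ord_inj n)); congr Lk; move: h kn; lia.
split.
  by rewrite -(LkT (@inj_id _)) cat_in // n2 leqnn.
by rewrite -(LkT (@rev_ord_inj n)) cat_in // n2 leqnn.
Qed.
Theorem corollary3p8 (R : realType) (n : nat) (hn : (2 <= n)%N)
  (T1 T2 : {set {set 'I_n}}) :
  is_tree T1 -> is_tree T2 ->
  ((forall S1 S2 : {set {set 'I_n}}, is_tree S1 -> is_tree S2 ->
      (setdim (msum (K R S1) (K R S2)) <= setdim (msum (K R T1) (K R T2)))%N)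
   <->
   [/\ binary T1, binary T2 & T1 :&: T2 = [set [set: 'I_n]]]).
Proof.
move=> t1 t2.
have inter1 : forall S1 S2 : {set {set 'I_n}}, is_tree S1 -> is_tree S2 ->
    (0 < #|S1 :&: S2|)%N.
  by move=> S1 S2 a b; apply/card_gt0P; exists setT; rewrite inE !tree_root.
have ub : forall S1 S2 : {set {set 'I_n}}, is_tree S1 -> is_tree S2 ->
    (#|S1 :|: S2| <= (n - 1) + (n - 1) - 1)%N.
  move=> S1 S2 a b; rewrite cardsU; have := tree_le a; have := tree_le b.
  have := inter1 _ _ a b; lia.
split.
  move=> h.
  have c1 := cat_tree hn (@inj_id 'I_n).
  have c2 := cat_tree hn (@rev_ord_inj n).
  have := h _ _ c1 c2; rewrite (dim_msum R c1 c2) (dim_msum R t1 t2).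
  rewrite cardsU (card_cat hn (@inj_id 'I_n)) (card_cat hn (@rev_ord_inj n)) cat_inter // cards1.
  rewrite cardsU => hge.
  have l1 := tree_le t1; have l2 := tree_le t2; have i12 := inter1 _ _ t1 t2.
  have e1 : #|T1| = (n - 1)%N by lia.
  have e2 : #|T2| = (n - 1)%N by lia.
  have ei : #|T1 :&: T2| = 1%N by lia.
  split; [by rewrite tree_binary // e1 | by rewrite tree_binary // e2 | ].
  by apply/eqP; rewrite eq_sym eqEcard sub1set inE !tree_root //= ei cards1.
case=> b1 b2 ei S1 S2 s1 s2; rewrite (dim_msum R s1 s2) (dim_msum R t1 t2).
move: b1 b2; rewrite !tree_binary // => /eqP b1 /eqP b2.
have := ub S1 S2 s1 s2; rewrite [#|T1 :|: T2|]cardsU ei cards1 b1 b2; lia.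
Qed.
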